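(* Let $X$ be a complex Banach space with open unit ball $B$, let $H(B)$ be a uniform algebra with $A_u(B)\subseteq H(B)\subseteq H^\infty(B)$, let $x_0^{**}\in\bar B^{**}$ and $f\in H(B)$. If $\hat f$ is constant on the fiber $M_{x_0^{**}}$, then $f$ extends to a norm-continuous function $f_0$ on $B\cup\{x_0^{**}\}$ which is $w(X^{**},X^* )$-continuous at $x_0^{**}$ (i.e. $f(x_\alpha)\to f_0(x_0^{**})$ for every net $(x_\alpha)\subset B$ weak-star converging to $x_0^{**}$).
   Context: $H^\infty(B)$: bounded holomorphic functions on $B$ with sup norm; $A_u(B)$: uniformly continuous holomorphic functions on $B$; a uniform algebra between them is a closed unital subalgebra of $H^\infty(B)$ containing $A_u(B)$. $M_{H(B)}$ is its spectrum (weak-star topology), $\hat f$ the Gelfand transform. $\bar B^{**}$ is the closed unit ball of $X^{**}$. The (original) fiber over $x^{**}\in\bar B^{**}$ is $M_{x^{**}}=\pi^{-1}(x^{**})$, where $\pi:M_{H(B)}\to\bar B^{**}$, $\pi(\tau)=\tau|_{X^*}$ (identifying a point of $\bar B^{**}$ with the character $L\mapsto x^{**}(L)$ on $X^*$), i.e. $M_{x^{**}}=\{\tau\in M_{H(B)}:\tau(L)=x^{**}(L)\ \forall L\in X^*\}$. *)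

(* Defs.v *)
From Stdlib Require Import Reals List.
Open Scope R_scope.

Record Cx := mkC { re : R; im : R }.
Definition C0 : Cx := mkC 0 0.
Definition C1 : Cx := mkC 1 0.
Definition Cadd (z w : Cx) : Cx := mkC (re z + re w) (im z + im w).
Definition Copp (z : Cx) : Cx := mkC (- re z) (- im z).
Definition Csub (z w : Cx) : Cx := Cadd z (Copp w).
Definition Cmul (z w : Cx) : Cx :=
  mkC (re z * re w - im z * im w) (re z * im w + im z * re w).
Definition Cabs (z : Cx) : R := sqrt (re z * re z + im z * im z).

Record CBanach := {
  bcar :> Type;
  bzero : bcar;
  badd : bcar -> bcar -> bcar;
  bopp : bcar -> bcar;
  bscal : Cx -> bcar -> bcar;
  bnorm : bcar -> R;
  badd_assoc : forall x y z, badd x (badd y z) = badd (badd x y) z;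
  badd_comm : forall x y, badd x y = badd y x;
  badd_0 : forall x, badd x bzero = x;
  badd_opp : forall x, badd x (bopp x) = bzero;
  bscal_1 : forall x, bscal C1 x = x;
  bscal_assoc : forall a b x, bscal a (bscal b x) = bscal (Cmul a b) x;
  bscal_addv : forall a x y, bscal a (badd x y) = badd (bscal a x) (bscal a y);
  bscal_addc : forall a b x, bscal (Cadd a b) x = badd (bscal a x) (bscal b x);
  bnorm_eq0 : forall x, bnorm x = 0 -> x = bzero;
  bnorm_scal : forall a x, bnorm (bscal a x) = Cabs a * bnorm x;
  bnorm_triangle : forall x y, bnorm (badd x y) <= bnorm x + bnorm y;
  bcomplete : forall u : nat -> bcar,
    (forall eps, 0 < eps -> exists N, forall n m, (N <= n)%nat -> (N <= m)%nat ->
       bnorm (badd (u n) (bopp (u m))) < eps) ->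
    exists l, forall eps, 0 < eps -> exists N, forall n, (N <= n)%nat ->
       bnorm (badd (u n) (bopp l)) < eps
}.

Section Banach.
Variable X : CBanach.

Definition bsub (x y : X) : X := badd X x (bopp X y).

Definition bounded_by (L : X -> Cx) (M : R) : Prop :=
  forall x, Cabs (L x) <= M * bnorm X x.

Definition in_dual (L : X -> Cx) : Prop :=
  (forall x y, L (badd X x y) = Cadd (L x) (L y)) /\
  (forall a x, L (bscal X a x) = Cmul a (L x)) /\
  (exists M, bounded_by L M).

(** Elements of Xbidual are represented as functions on (X -> Cx); only their
    values on Xdual matter. *)
Definition bidual := (X -> Cx) -> Cx.

Definition bidual_linear (phi : bidual) : Prop :=
  (forall L1 L2, in_dual L1 -> in_dual L2 ->
     phi (fun x => Cadd (L1 x) (L2 x)) = Cadd (phi L1) (phi L2)) /\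
  (forall a L, in_dual L -> phi (fun x => Cmul a (L x)) = Cmul a (phi L)).

(** ||phi - psi||_{Xbidual} <= d, i.e. |phi L - psi L| <= d ||L|| for L in Xdual *)
Definition bidual_dist_le (phi psi : bidual) (d : R) : Prop :=
  forall L M, in_dual L -> 0 <= M -> bounded_by L M ->
    Cabs (Csub (phi L) (psi L)) <= d * M.

Definition bidual_dist_lt (phi psi : bidual) (r : R) : Prop :=
  exists d, d < r /\ bidual_dist_le phi psi d.

Definition in_bidual_ball (phi : bidual) : Prop :=
  bidual_linear phi /\ bidual_dist_le phi (fun _ => C0) 1.

Definition Jcan (x : X) : bidual := fun L => L x.

Definition Ball := { x : X | bnorm X x < 1 }.

Definition holomorphic (f : Ball -> Cx) : Prop :=
  forall x : Ball, exists L, in_dual L /\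
    forall eps, 0 < eps -> exists delta, 0 < delta /\
      forall y : Ball, bnorm X (bsub (proj1_sig y) (proj1_sig x)) < delta ->
        Cabs (Csub (Csub (f y) (f x)) (L (bsub (proj1_sig y) (proj1_sig x))))
          <= eps * bnorm X (bsub (proj1_sig y) (proj1_sig x)).

Definition unif_continuous (f : Ball -> Cx) : Prop :=
  forall eps, 0 < eps -> exists delta, 0 < delta /\
    forall x y : Ball, bnorm X (bsub (proj1_sig x) (proj1_sig y)) < delta ->
      Cabs (Csub (f x) (f y)) < eps.

Definition fbounded (f : Ball -> Cx) : Prop :=
  exists M, forall x, Cabs (f x) <= M.

Definition in_Hinf (f : Ball -> Cx) : Prop := holomorphic f /\ fbounded f.
Definition in_Au (f : Ball -> Cx) : Prop := holomorphic f /\ unif_continuous f.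

Definition uniform_algebra_between (H : (Ball -> Cx) -> Prop) : Prop :=
  (forall f, in_Au f -> H f) /\
  (forall f, H f -> in_Hinf f) /\
  (forall f g, H f -> H g -> H (fun x => Cadd (f x) (g x))) /\
  (forall a f, H f -> H (fun x => Cmul a (f x))) /\
  (forall f g, H f -> H g -> H (fun x => Cmul (f x) (g x))) /\
  (forall (u : nat -> Ball -> Cx) g, (forall n, H (u n)) ->
     (forall eps, 0 < eps -> exists N, forall n, (N <= n)%nat ->
        forall x, Cabs (Csub (u n x) (g x)) <= eps) -> H g).

Definition in_spectrum (H : (Ball -> Cx) -> Prop) (tau : (Ball -> Cx) -> Cx) : Prop :=
  (forall f g, H f -> H g -> tau (fun x => Cadd (f x) (g x)) = Cadd (tau f) (tau g)) /\
  (forall a f, H f -> tau (fun x => Cmul a (f x)) = Cmul a (tau f)) /\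
  (forall f g, H f -> H g -> tau (fun x => Cmul (f x) (g x)) = Cmul (tau f) (tau g)) /\
  (exists f, H f /\ tau f <> C0).

Definition in_fiber (H : (Ball -> Cx) -> Prop) (x0 : bidual) (tau : (Ball -> Cx) -> Cx) : Prop :=
  in_spectrum H tau /\
  forall L, in_dual L -> tau (fun x : Ball => L (proj1_sig x)) = x0 L.

(** Points of B u {x0}: [Some x] is J(x), [None] is x0 *)
Definition emb (x0 : bidual) (p : option Ball) : bidual :=
  match p with Some x => Jcan (proj1_sig x) | None => x0 end.

Definition norm_continuous_on (x0 : bidual) (f0 : option Ball -> Cx) : Prop :=
  forall p eps, 0 < eps -> exists delta, 0 < delta /\
    forall q, bidual_dist_lt (emb x0 q) (emb x0 p) delta ->
      Cabs (Csub (f0 q) (f0 p)) < eps.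

(** w(Xbidual,Xdual  )-continuity of f0 at x0 (relative to B u {x0}),
    via the basic weak-star neighbourhoods of x0 *)
Definition weakstar_continuous_at_x0 (x0 : bidual) (f0 : option Ball -> Cx) : Prop :=
  forall eps, 0 < eps -> exists (Ls : list (X -> Cx)) delta,
    Forall in_dual Ls /\ 0 < delta /\
    forall q, (forall L, In L Ls -> Cabs (Csub (emb x0 q L) (x0 L)) < delta) ->
      Cabs (Csub (f0 q) (f0 None)) < eps.

End Banach.

Arguments Ball : clear implicits.

(* Main.v *)
Module MCAux.
From mathcomp Require Import all_boot boolp classical_sets filter.
Lemma ultra_ex (I T : Type) (B : I -> T -> Prop) :
  (exists i : I, True) ->
  (forall i j, exists k, forall x, B k x -> B i x /\ B j x) ->
  (forall i, exists x, B i x) ->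
  exists U : (T -> Prop) -> Prop,
    (forall i, U (B i)) /\
    (forall A C, U A -> U C -> U (fun x => A x /\ C x)) /\
    (forall A C : T -> Prop, (forall x, A x -> C x) -> U A -> U C) /\
    (forall A, U A -> exists x, A x) /\
    (forall A, U A \/ U (fun x => ~ A x)).
Proof.
move=> [i0 _] Hint Hne.
have FF : Filter (filter_from setT B).
  apply: filter_fromT_filter; first by exists i0.
  move=> i j; have [k Hk] := Hint i j; exists k => x /Hk [? ?]; by split.
have PF : ProperFilter (filter_from setT B).
  apply: filter_from_proper => i _; have [x Hx] := Hne i; by exists x.
have [G [UG sub]] := ultraFilterLemma PF.
exists G; split; [|split; [|split; [|split]]].
- move=> i; apply: sub; exists i => //.
- move=> P0 Q0 GA GC; apply: filterS (filterI GA GC); move=> x [? ?]; by split.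
- move=> P0 Q0 HPQ GA; exact: (filterS HPQ GA).
- move=> A GA; have [x Ax] := filter_ex GA; by exists x.
- move=> A; have := in_ultra_setVsetC A UG; by [].
Qed.

Lemma zorn_prop (T : Type) (t0 : T) (R : T -> T -> Prop) :
  (forall t, R t t) -> (forall r s t, R r s -> R s t -> R r t) ->
  (forall A : T -> Prop, (forall s t, A s -> A t -> R s t \/ R t s) ->
      exists t, forall s, A s -> R s t) ->
  exists t, forall s, R t s -> R s t.
Proof.
move=> Rr Rt Rc.
have [t Ht] : exists t, premaximal (fun a b => `[< R a b >]) t.
  apply: (@ZL_preorder T t0).
  - move=> t; exact/asboolP.
  - move=> r s t /asboolP a /asboolP b; apply/asboolP; exact: Rt a b.
  - move=> A At. have [|t Ht] := Rc A.
      by move=> s u As Au; case: (At s u As Au) => /asboolP; [left|right].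
    exists t => s As; apply/asboolP; exact: Ht.
exists t => s Rts; have := Ht s; move=> H; apply/asboolP; apply: H; exact/asboolP.
Qed.
End MCAux.
From Stdlib Require Import Reals List Lra Psatz Classical ClassicalEpsilon.
Require Import Defs.
Open Scope R_scope.

Lemma Cx_ext (z w : Cx) : re z = re w -> im z = im w -> z = w.
Proof. destruct z, w; simpl; intros; subst; reflexivity. Qed.

Lemma Cabs_ge0 z : 0 <= Cabs z.
Proof. unfold Cabs; apply sqrt_pos. Qed.

Lemma sqrt_abs_eq a : sqrt (a * a) = Rabs a.
Proof. rewrite <- Rsqr_def; apply sqrt_Rsqr_abs. Qed.

Lemma Cabs_re z : Rabs (re z) <= Cabs z.
Proof.
  unfold Cabs; rewrite <- sqrt_abs_eq; apply sqrt_le_1_alt; nra.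
Qed.

Lemma Cabs_im z : Rabs (im z) <= Cabs z.
Proof.
  unfold Cabs; rewrite <- sqrt_abs_eq; apply sqrt_le_1_alt; nra.
Qed.

Lemma Cabs_le_sum z : Cabs z <= Rabs (re z) + Rabs (im z).
Proof.
  unfold Cabs.
  assert (H0 : 0 <= Rabs (re z) + Rabs (im z)) by (pose proof (Rabs_pos (re z)); pose proof (Rabs_pos (im z)); lra).
  rewrite <- (sqrt_square _ H0). apply sqrt_le_1_alt.
  pose proof (Rabs_pos (re z)); pose proof (Rabs_pos (im z)).
  assert (E1 : Rabs (re z) * Rabs (re z) = re z * re z) by (rewrite <- Rabs_mult; apply Rabs_right; nra).
  assert (E2 : Rabs (im z) * Rabs (im z) = im z * im z) by (rewrite <- Rabs_mult; apply Rabs_right; nra).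
  nra.
Qed.

Lemma Cabs_mul z w : Cabs (Cmul z w) = Cabs z * Cabs w.
Proof.
  unfold Cabs, Cmul; simpl. rewrite <- sqrt_mult by nra. f_equal. ring.
Qed.

Lemma Cabs_triangle z w : Cabs (Cadd z w) <= Cabs z + Cabs w.
Proof.
  destruct z as [a b], w as [c d]; unfold Cabs, Cadd; simpl.
  set (u := sqrt (a*a+b*b)). set (v := sqrt (c*c+d*d)).
  assert (Hu : 0 <= u) by apply sqrt_pos. assert (Hv : 0 <= v) by apply sqrt_pos.
  assert (Hu2 : u * u = a*a+b*b) by (unfold u; apply sqrt_sqrt; nra).
  assert (Hv2 : v * v = c*c+d*d) by (unfold v; apply sqrt_sqrt; nra).
  assert (Hcs : a*c+b*d <= u*v).
  { destruct (Rle_lt_dec (a*c+b*d) 0) as [h|h]. nra.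
    assert (h2 : (a*c+b*d)*(a*c+b*d) <= (u*v)*(u*v)).
    { replace ((u*v)*(u*v)) with ((u*u)*(v*v)) by ring. rewrite Hu2, Hv2. pose proof (Rle_0_sqr (a*d-b*c)); unfold Rsqr in *; nra. }
    assert (0 <= u*v) by nra. destruct (Rle_lt_dec (a*c+b*d) (u*v)) as [k|k]; auto. exfalso. assert (k2: (u*v)*(u*v) < (a*c+b*d)*(a*c+b*d)) by (apply Rmult_le_0_lt_compat; lra). lra. }
  rewrite <- (sqrt_square (u+v)) by lra. apply sqrt_le_1_alt. nra.
Qed.

Lemma Cabs_opp z : Cabs (Copp z) = Cabs z.
Proof. unfold Cabs, Copp; simpl; f_equal; ring. Qed.

Lemma Cabs_real r : Cabs (mkC r 0) = Rabs r.
Proof. unfold Cabs; simpl. rewrite <- sqrt_abs_eq. f_equal; ring. Qed.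

Lemma Cabs_C0 : Cabs C0 = 0.
Proof. unfold C0; rewrite Cabs_real; apply Rabs_R0. Qed.

Lemma Cabs_C1 : Cabs C1 = 1.
Proof. unfold C1; rewrite Cabs_real; apply Rabs_R1. Qed.

Lemma Cabs_eq0 z : Cabs z = 0 -> z = C0.
Proof.
  unfold Cabs; intro H. apply sqrt_eq_0 in H; [|nra].
  apply Cx_ext; simpl; nra.
Qed.

Lemma Cabs_pos z : z <> C0 -> 0 < Cabs z.
Proof.
  intro H. destruct (Cabs_ge0 z) as [h|h]; auto. exfalso; apply H, Cabs_eq0; auto.
Qed.

Lemma Csub_same z : Csub z z = C0.
Proof. apply Cx_ext; unfold Csub, Cadd, Copp; simpl; ring. Qed.

Lemma Cabs_sub_tri a b c : Cabs (Csub a c) <= Cabs (Csub a b) + Cabs (Csub b c).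
Proof.
  replace (Csub a c) with (Cadd (Csub a b) (Csub b c)) by
    (apply Cx_ext; unfold Csub, Cadd, Copp; simpl; ring).
  apply Cabs_triangle.
Qed.

Lemma Cabs_sub_sym a b : Cabs (Csub a b) = Cabs (Csub b a).
Proof.
  replace (Csub a b) with (Copp (Csub b a)) by
    (apply Cx_ext; unfold Csub, Cadd, Copp; simpl; ring).
  apply Cabs_opp.
Qed.

Lemma Rabs_le_inv x M : Rabs x <= M -> - M <= x <= M.
Proof.
  intro H; split; [pose proof (Rle_abs (- x)) as h; rewrite Rabs_Ropp in h | pose proof (Rle_abs x)]; lra.
Qed.
Section BanachFacts.
Variable X : CBanach.

Notation "x +v y" := (badd X x y) (at level 50, left associativity).
Notation nm := (bnorm X).

Lemma opp_unique (x y : X) : x +v y = bzero X -> y = bopp X x.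
Proof.
  intro H.
  rewrite <- (badd_0 X y). rewrite <- (badd_opp X x).
  rewrite badd_assoc. rewrite (badd_comm X y x), H.
  rewrite badd_comm, badd_0. reflexivity.
Qed.

Lemma self_add_zero (z : X) : z = z +v z -> z = bzero X.
Proof.
  intro H. pose proof (f_equal (fun w => badd X w (bopp X z)) H) as E; simpl in E.
  rewrite badd_opp, <- badd_assoc, badd_opp, badd_0 in E. symmetry; exact E.
Qed.

Lemma bscal0 (x : X) : bscal X C0 x = bzero X.
Proof.
  apply self_add_zero. rewrite <- bscal_addc. f_equal.
  apply Cx_ext; unfold C0, Cadd; simpl; ring.
Qed.

Lemma bscal_zero a : bscal X a (bzero X) = bzero X.
Proof.
  rewrite <- (bscal0 (bzero X)), bscal_assoc. f_equal.
  apply Cx_ext; unfold C0, Cmul; simpl; ring.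
Qed.

Lemma bnorm0 : nm (bzero X) = 0.
Proof. rewrite <- (bscal0 (bzero X)), bnorm_scal, Cabs_C0; ring. Qed.

Definition mC1 : Cx := mkC (-1) 0.

Lemma bopp_scal (x : X) : bopp X x = bscal X mC1 x.
Proof.
  symmetry; apply opp_unique.
  rewrite <- (bscal_1 X x) at 1. rewrite <- bscal_addc.
  rewrite <- (bscal0 x). f_equal. apply Cx_ext; unfold C0, C1, mC1, Cadd; simpl; ring.
Qed.

Lemma bnorm_opp (x : X) : nm (bopp X x) = nm x.
Proof.
  rewrite bopp_scal, bnorm_scal. unfold mC1. rewrite Cabs_real.
  rewrite Rabs_left by lra; ring.
Qed.

Lemma bnorm_ge0 (x : X) : 0 <= nm x.
Proof.
  pose proof (bnorm_triangle X x (bopp X x)) as H.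
  rewrite badd_opp, bnorm0, bnorm_opp in H. lra.
Qed.

Lemma cancel_mid (a b c : X) : (a +v bopp X b) +v (b +v c) = a +v c.
Proof.
  rewrite <- badd_assoc, (badd_assoc X (bopp X b)), (badd_comm X (bopp X b) b), badd_opp.
  rewrite (badd_comm X (bzero X)), badd_0. reflexivity.
Qed.

Lemma bsub_norm_sym (x y : X) : nm (bsub X x y) = nm (bsub X y x).
Proof.
  unfold bsub. rewrite <- bnorm_opp. f_equal. symmetry. apply opp_unique.
  rewrite cancel_mid, badd_opp. reflexivity.
Qed.

Lemma bsub_tri (x y z : X) : nm (bsub X x z) <= nm (bsub X x y) + nm (bsub X y z).
Proof.
  replace (bsub X x z) with (bsub X x y +v bsub X y z). apply bnorm_triangle.
  unfold bsub. apply cancel_mid.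
Qed.

Lemma bounded_pos (L : X -> Cx) M : bounded_by X L M -> exists K, 0 < K /\ bounded_by X L K.
Proof.
  intro H. exists (Rabs M + 1). split. pose proof (Rabs_pos M); lra.
  intro x. eapply Rle_trans; [apply H|]. pose proof (bnorm_ge0 x).
  pose proof (Rle_abs M). nra.
Qed.

Lemma dual_zero (L : X -> Cx) : in_dual X L -> L (bzero X) = C0.
Proof.
  intros [Ha _]. pose proof (Ha (bzero X) (bzero X)) as E. rewrite badd_0 in E.
  apply Cx_ext; unfold C0; simpl; [ apply (f_equal re) in E | apply (f_equal im) in E ];
  unfold Cadd in E; simpl in E; lra.
Qed.

Lemma dual_sub (L : X -> Cx) x y : in_dual X L -> L (bsub X x y) = Csub (L x) (L y).
Proof.
  intros HL. pose proof HL as [Ha [Hs _]]. unfold bsub. rewrite Ha, bopp_scal, Hs.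
  apply Cx_ext; unfold Csub, Cadd, Copp, Cmul, mC1; simpl; ring.
Qed.

Lemma dual_bound (L : X -> Cx) K x : bounded_by X L K -> Cabs (L x) <= K * nm x.
Proof. intro H; apply H. Qed.

End BanachFacts.
Section HBReal.
Variable X : CBanach.
Notation "x +v y" := (badd X x y) (at level 50, left associativity).
Notation nm := (bnorm X).
Definition rs (r : R) (x : X) : X := bscal X (mkC r 0) x.

Lemma rs_assoc r s x : rs r (rs s x) = rs (r * s) x.
Proof. unfold rs; rewrite bscal_assoc; f_equal; apply Cx_ext; unfold Cmul; simpl; ring. Qed.
Lemma rs_addc r s x : rs (r + s) x = rs r x +v rs s x.
Proof. unfold rs; rewrite <- bscal_addc; f_equal; apply Cx_ext; unfold Cadd; simpl; ring. Qed.
Lemma rs_addv r x y : rs r (x +v y) = rs r x +v rs r y.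
Proof. unfold rs; apply bscal_addv. Qed.
Lemma rs1 x : rs 1 x = x.
Proof. unfold rs; apply bscal_1. Qed.
Lemma rs0 x : rs 0 x = bzero X.
Proof. unfold rs; apply bscal0. Qed.
Lemma rs_zero r : rs r (bzero X) = bzero X.
Proof. unfold rs; apply bscal_zero. Qed.
Lemma nm_rs r x : nm (rs r x) = Rabs r * nm x.
Proof. unfold rs; rewrite bnorm_scal, Cabs_real; reflexivity. Qed.
Lemma bopp_rs x : bopp X x = rs (-1) x.
Proof. rewrite bopp_scal; unfold rs, mC1; reflexivity. Qed.
Lemma add0l x : bzero X +v x = x.
Proof. rewrite badd_comm; apply badd_0. Qed.
Lemma add_swap4 a b c d : (a +v b) +v (c +v d) = (a +v c) +v (b +v d).
Proof.
  rewrite <- !badd_assoc. f_equal. rewrite !badd_assoc. f_equal. apply badd_comm.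
Qed.
Lemma add_move a b c : a +v b = c -> a = c +v bopp X b.
Proof. intro H; rewrite <- H, <- badd_assoc, badd_opp, badd_0; reflexivity. Qed.

Definition is_ext (v : X) (D : X -> Prop) (g : X -> R) : Prop :=
  D (bzero X) /\ (forall x y, D x -> D y -> D (x +v y)) /\ (forall r x, D x -> D (rs r x)) /\
  (forall x y, D x -> D y -> g (x +v y) = g x + g y) /\
  (forall r x, D x -> g (rs r x) = r * g x) /\
  (forall x, D x -> g x <= nm x) /\ D v /\ g v = nm v.

Lemma g_zero v D g : is_ext v D g -> g (bzero X) = 0.
Proof.
  intros (H0 & _ & _ & _ & Hh & _). rewrite <- (rs0 (bzero X)), Hh; auto; ring.
Qed.


Lemma rs_cancel_diff r r' v : rs r v = rs r' v -> rs (r - r') v = bzero X.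
Proof.
  intro E. unfold Rminus. rewrite rs_addc, E, <- rs_addc.
  replace (r' + - r') with 0 by ring. apply rs0.
Qed.

Lemma init_ext v : exists D g, is_ext v D g.
Proof.
  set (D := fun x => exists r, x = rs r v).
  set (g := fun x => match excluded_middle_informative (exists r, x = rs r v) with
                     | left h => proj1_sig (constructive_indefinite_description _ h) * nm v
                     | right _ => 0 end).
  assert (Hg : forall r, g (rs r v) = r * nm v).
  { intro r. unfold g. destruct excluded_middle_informative as [h|h].
    - destruct (constructive_indefinite_description _ h) as [r' Hr']; simpl.
      pose proof (rs_cancel_diff _ _ _ Hr') as E.
      pose proof (f_equal nm E) as E2. rewrite nm_rs, bnorm0 in E2.
      destruct (Req_dec r' r) as [->|ne]; [reflexivity|].
      assert (Rabs (r - r') <> 0) by (apply Rabs_no_R0; lra).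
      assert (nm v = 0) by (apply Rmult_integral in E2; tauto).
      rewrite H0; ring.
    - exfalso; apply h; exists r; reflexivity. }
  exists D, g. unfold is_ext; repeat split.
  - exists 0; rewrite rs0; reflexivity.
  - intros x y [r ->] [s ->]; exists (r + s); rewrite rs_addc; reflexivity.
  - intros t x [r ->]; exists (t * r); rewrite rs_assoc; reflexivity.
  - intros x y [r ->] [s ->]. rewrite <- rs_addc, !Hg; ring.
  - intros t x [r ->]. rewrite rs_assoc, !Hg; ring.
  - intros x [r ->]. rewrite Hg, nm_rs. pose proof (bnorm_ge0 X v). pose proof (Rle_abs r). nra.
  - exists 1; rewrite rs1; reflexivity.
  - rewrite <- (rs1 v) at 1. rewrite Hg; ring.
Qed.

Lemma sum_split x y z : x +v y = (x +v bopp X z) +v (z +v y).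
Proof.
  rewrite <- badd_assoc, (badd_assoc X (bopp X z)), (badd_comm X (bopp X z) z), badd_opp, add0l.
  reflexivity.
Qed.

Lemma decomp_unique D v g z x r x' r' : is_ext v D g -> ~ D z -> D x -> D x' ->
  x +v rs r z = x' +v rs r' z -> r = r' /\ x = x'.
Proof.
  intros (H0 & Hadd & Hsc & _) nz Dx Dx' E.
  assert (E1 : x = x' +v rs (r' - r) z).
  { apply add_move in E. rewrite E, <- badd_assoc. f_equal.
    rewrite bopp_rs, rs_assoc, <- rs_addc. f_equal; ring. }
  destruct (Req_dec r r') as [<-|ne].
  - split; auto. rewrite E1. replace (r - r) with 0 by ring. rewrite rs0, badd_0; reflexivity.
  - exfalso; apply nz.
    assert (E2 : rs (r' - r) z = x +v bopp X x').
    { rewrite E1, (badd_comm X x'), <- badd_assoc, badd_opp, badd_0. reflexivity. }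
    replace z with (rs (/ (r' - r)) (x +v bopp X x')).
    + apply Hsc, Hadd; auto. rewrite bopp_rs; apply Hsc; auto.
    + rewrite <- E2, rs_assoc. replace (/ (r' - r) * (r' - r)) with 1 by (field; lra).
      apply rs1.
Qed.

Lemma one_step v D g z : is_ext v D g -> ~ D z ->
  exists D' g', is_ext v D' g' /\ (forall x, D x -> D' x) /\ (forall x, D x -> g' x = g x) /\ D' z.
Proof.
  intros He nz. pose proof He as (H0 & Hadd & Hsc & Hgadd & Hgsc & Hgp & Hv & Hgv).
  pose proof (g_zero _ _ _ He) as Hg0.
  set (S := fun a => exists x, D x /\ a = g x - nm (bsub X x z)).
  assert (key : forall x y, D x -> D y -> g x - nm (bsub X x z) <= nm (z +v y) - g y).
  { intros x y Dx Dy. pose proof (Hgp _ (Hadd _ _ Dx Dy)). rewrite Hgadd in H by auto.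
    pose proof (bnorm_triangle X (x +v bopp X z) (z +v y)). rewrite <- sum_split in H1.
    unfold bsub. lra. }
  assert (Sb : bound S).
  { exists (nm (z +v bzero X) - g (bzero X)). intros a [x [Dx ->]]. apply key; auto. }
  assert (Sne : exists a, S a).
  { exists (g (bzero X) - nm (bsub X (bzero X) z)), (bzero X); split; auto. }
  destruct (completeness S Sb Sne) as [c [Hub Hlub]].
  assert (c_lo : forall x, D x -> g x - nm (bsub X x z) <= c).
  { intros x Dx; apply Hub; exists x; split; auto. }
  assert (c_hi : forall y, D y -> c <= nm (z +v y) - g y).
  { intros y Dy; apply Hlub. intros a [x [Dx ->]]. apply key; auto. }
  set (D' := fun w => exists x r, D x /\ w = x +v rs r z).
  set (g' := fun w => match excluded_middle_informative
                         (exists pr : X * R, D (fst pr) /\ w = fst pr +v rs (snd pr) z) with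
                     | left h => let pr := proj1_sig (constructive_indefinite_description _ h) in
                                 g (fst pr) + snd pr * c
                     | right _ => 0 end).
  assert (Hg' : forall x r, D x -> g' (x +v rs r z) = g x + r * c).
  { intros x r Dx. unfold g'. destruct excluded_middle_informative as [h|h].
    - destruct (constructive_indefinite_description _ h) as [[x1 r1] [Dx1 E]]; simpl in *.
      destruct (decomp_unique _ _ _ _ _ _ _ _ He nz Dx Dx1 E) as [-> ->]. reflexivity.
    - exfalso; apply h; exists (x, r); simpl; auto. }
  assert (Dx_in : forall x, D x -> x = x +v rs 0 z).
  { intros x _; rewrite rs0, badd_0; reflexivity. }
  exists D', g'. split; [|split; [|split]].
  - unfold is_ext; repeat split.
    + exists (bzero X), 0; split; auto.
    + intros w1 w2 [x [r [Dx ->]]] [y [s [Dy ->]]]. exists (x +v y), (r + s); split; auto.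
      rewrite rs_addc; apply add_swap4.
    + intros t w [x [r [Dx ->]]]. exists (rs t x), (t * r); split; auto.
      rewrite rs_addv, rs_assoc; reflexivity.
    + intros w1 w2 [x [r [Dx ->]]] [y [s [Dy ->]]].
      rewrite add_swap4, <- rs_addc, !Hg', Hgadd; auto. ring.
    + intros t w [x [r [Dx ->]]]. rewrite rs_addv, rs_assoc, !Hg', Hgsc; auto. ring.
    + intros w [x [r [Dx ->]]]. rewrite Hg' by auto.
      destruct (Rtotal_order r 0) as [rn|[r0|rp]].
      * set (s := - r). assert (sp : 0 < s) by (unfold s; lra).
        pose proof (c_lo _ (Hsc (/ s) _ Dx)) as h. rewrite Hgsc in h by auto.
        assert (E : x +v rs r z = rs s (bsub X (rs (/ s) x) z)).
        { unfold bsub. rewrite rs_addv, rs_assoc, bopp_rs, rs_assoc.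
          replace (s * / s) with 1 by (field; lra). rewrite rs1. f_equal. f_equal. unfold s; ring. }
        rewrite E, nm_rs, Rabs_right by lra.
        assert (s * (/ s * g x - nm (bsub X (rs (/ s) x) z)) <= s * c) by (apply Rmult_le_compat_l; lra).
        replace (s * (/ s * g x - nm (bsub X (rs (/ s) x) z))) with
           (g x - s * nm (bsub X (rs (/ s) x) z)) in H by (field; lra).
        replace r with (- s) by (unfold s; ring). lra.
      * subst r. rewrite rs0, badd_0. rewrite Rmult_0_l, Rplus_0_r. apply Hgp; auto.
      * pose proof (c_hi _ (Hsc (/ r) _ Dx)) as h. rewrite Hgsc in h by auto.
        assert (E : x +v rs r z = rs r (z +v rs (/ r) x)).
        { rewrite rs_addv, rs_assoc. replace (r * / r) with 1 by (field; lra). rewrite rs1.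
          apply badd_comm. }
        rewrite E, nm_rs, Rabs_right by lra.
        assert (r * c <= r * (nm (z +v rs (/ r) x) - / r * g x)) by (apply Rmult_le_compat_l; lra).
        replace (r * (nm (z +v rs (/ r) x) - / r * g x)) with
           (r * nm (z +v rs (/ r) x) - g x) in H by (field; lra).
        lra.
    + exists v, 0; split; auto.
    + rewrite (Dx_in v Hv) at 1. rewrite Hg' by auto. rewrite Hgv; ring.
  - intros x Dx. exists x, 0; split; auto.
  - intros x Dx. rewrite (Dx_in x Dx) at 1. rewrite Hg' by auto. ring.
  - exists (bzero X), 1. split; auto. rewrite rs1, add0l; reflexivity.
Qed.

Definition Ext (v : X) := { dg : (X -> Prop) * (X -> R) | is_ext v (fst dg) (snd dg) }.
Definition EDom {v} (a : Ext v) := fst (proj1_sig a).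
Definition EFun {v} (a : Ext v) := snd (proj1_sig a).
Definition ext_le {v} (a b : Ext v) : Prop :=
  (forall x, EDom a x -> EDom b x) /\ (forall x, EDom a x -> EFun b x = EFun a x).

Lemma chain_bound v (t0 : Ext v) (A : Ext v -> Prop) :
  (forall s t, A s -> A t -> ext_le s t \/ ext_le t s) ->
  exists t, forall s, A s -> ext_le s t.
Proof.
  intro Htot.
  destruct (classic (exists s0, A s0)) as [[s0 As0]|hne]; last first.
  { exists t0. intros s As; exfalso; apply hne; eauto. }
  set (Du := fun x => exists t, A t /\ EDom t x).
  set (gu := fun x => match excluded_middle_informative (exists t, A t /\ EDom t x) with
                      | left h => EFun (proj1_sig (constructive_indefinite_description _ h)) x
                      | right _ => 0 end).
  assert (Hgu : forall t x, A t -> EDom t x -> gu x = EFun t x).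
  { intros t x At Dt. unfold gu. destruct excluded_middle_informative as [h|h].
    - destruct (constructive_indefinite_description _ h) as [t' [At' Dt']]; simpl.
      destruct (Htot t t' At At') as [[_ E]|[_ E]]; auto. symmetry; auto.
    - exfalso; apply h; eauto. }
  assert (big : forall t1 t2, A t1 -> A t2 -> exists t, A t /\ ext_le t1 t /\ ext_le t2 t).
  { intros t1 t2 A1 A2. destruct (Htot t1 t2 A1 A2) as [h|h].
    - exists t2; repeat split; auto; intros; try apply h; auto; reflexivity.
    - exists t1; repeat split; auto; intros; try apply h; auto; reflexivity. }
  assert (Hext : is_ext v Du gu).
  { pose proof (proj2_sig s0) as (H0 & _ & _ & _ & _ & _ & Hv & Hgv).
    unfold EDom, EFun in *. unfold is_ext; repeat split.
    - exists s0; split; auto.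
    - intros x y [t1 [A1 D1]] [t2 [A2 D2]]. destruct (big t1 t2 A1 A2) as [t [At [[i1 _] [i2 _]]]].
      exists t; split; auto. pose proof (proj2_sig t) as (_ & Ha & _). apply Ha; [apply i1|apply i2]; assumption.
    - intros r x [t1 [A1 D1]]. exists t1; split; auto. pose proof (proj2_sig t1) as (_ & _ & Hs & _). apply Hs; auto.
    - intros x y [t1 [A1 D1]] [t2 [A2 D2]]. destruct (big t1 t2 A1 A2) as [t [At [[i1 _] [i2 _]]]].
      pose proof (proj2_sig t) as (_ & Ha & _ & Hga & _).
      assert (Dx : fst (proj1_sig t) x) by (apply i1; assumption).
      assert (Dy : fst (proj1_sig t) y) by (apply i2; assumption).
      rewrite (Hgu t _ At (Ha _ _ Dx Dy)), (Hgu t x At Dx), (Hgu t y At Dy). apply Hga; assumption.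
    - intros r x [t1 [A1 D1]]. pose proof (proj2_sig t1) as (_ & _ & Hs & _ & Hgs & _).
      rewrite (Hgu t1 _ A1 (Hs _ _ D1)), (Hgu t1 x A1 D1). apply Hgs; assumption.
    - intros x [t1 [A1 D1]]. pose proof (proj2_sig t1) as (_ & _ & _ & _ & _ & Hp & _).
      rewrite (Hgu t1 x A1 D1). apply Hp; assumption.
    - exists s0; split; auto.
    - rewrite (Hgu s0 v As0 Hv). exact Hgv. }
  exists (exist _ (Du, gu) Hext). intros s As. split.
  - intros x Dx. exists s; split; auto.
  - intros x Dx. simpl. unfold EFun; simpl. apply Hgu; auto.
Qed.

Lemma real_HB v : exists g : X -> R, (forall x y, g (x +v y) = g x + g y) /\
  (forall r x, g (rs r x) = r * g x) /\ (forall x, g x <= nm x) /\ g v = nm v.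
Proof.
  destruct (init_ext v) as [D0 [g0 He0]].
  set (t0 := exist (fun dg => is_ext v (fst dg) (snd dg)) (D0, g0) He0 : Ext v).
  destruct (MCAux.zorn_prop (Ext v) t0 ext_le) as [t Ht].
  - intro t; split; auto.
  - intros a b c [h1 h2] [h3 h4]; split; auto. intros x Dx. rewrite h4 by auto. auto.
  - intros A HA. apply (chain_bound v t0 A HA).
  - assert (full : forall z, EDom t z).
    { intro z. apply NNPP; intro nz.
      destruct (one_step v (EDom t) (EFun t) z (proj2_sig t) nz) as [D' [g' [He' [s1 [s2 Dz]]]]].
      set (t' := exist (fun dg => is_ext v (fst dg) (snd dg)) (D', g') He' : Ext v).
      destruct (Ht t') as [h _]. { split; auto. }
      apply nz, h, Dz. }
    pose proof (proj2_sig t) as (_ & _ & _ & Hga & Hgs & Hp & _ & Hgv).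
    exists (EFun t). unfold EFun, EDom in *.
    repeat split; intros; [apply Hga|apply Hgs|apply Hp|exact Hgv]; apply full.
Qed.

Definition ci : Cx := mkC 0 1.

Lemma scal_decomp a x : bscal X a x = rs (re a) x +v rs (im a) (bscal X ci x).
Proof.
  unfold rs. rewrite bscal_assoc, <- bscal_addc. f_equal.
  apply Cx_ext; unfold Cadd, Cmul, ci; simpl; ring.
Qed.

Lemma complex_HB v : exists L, in_dual X L /\ bounded_by X L 2 /\ nm v <= Cabs (L v).
Proof.
  destruct (real_HB v) as [g [Ha [Hs [Hp Hv]]]].
  assert (Habs : forall x, Rabs (g x) <= nm x).
  { intro x. apply Rabs_le. split; [|apply Hp].
    pose proof (Hp (rs (-1) x)). rewrite Hs, nm_rs in H.
    rewrite Rabs_left in H by lra. lra. }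
  assert (Hci : forall x, nm (bscal X ci x) = nm x).
  { intro x. rewrite bnorm_scal. unfold Cabs, ci; simpl.
    replace (0 * 0 + 1 * 1) with 1 by ring. rewrite sqrt_1; ring. }
  exists (fun x => mkC (g x) (- g (bscal X ci x))). split; [|split].
  - split; [|split].
    + intros x y. rewrite bscal_addv, !Ha. apply Cx_ext; unfold Cadd; simpl; ring.
    + intros a x. rewrite bscal_assoc.
      rewrite (scal_decomp a x), (scal_decomp (Cmul ci a) x).
      rewrite !Ha, !Hs. apply Cx_ext; unfold Cmul, ci; simpl; ring.
    + exists 2. intro x. eapply Rle_trans; [apply Cabs_le_sum|]. simpl.
      rewrite Rabs_Ropp. pose proof (Habs x). pose proof (Habs (bscal X ci x)). rewrite Hci in H0. lra.
  - intro x. eapply Rle_trans; [apply Cabs_le_sum|]. simpl.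
    rewrite Rabs_Ropp. pose proof (Habs x). pose proof (Habs (bscal X ci x)). rewrite Hci in H0. lra.
  - eapply Rle_trans; [|apply Cabs_re]. simpl. rewrite Hv. apply Rle_abs.
Qed.

Lemma bidual_norm_control (x y : X) d :
  bidual_dist_le X (Jcan X y) (Jcan X x) d -> nm (bsub X y x) <= 2 * d.
Proof.
  intro H. destruct (complex_HB (bsub X y x)) as [L [HL [Hb Hge]]].
  pose proof (H L 2 HL ltac:(lra) Hb) as h. unfold Jcan in h.
  rewrite <- dual_sub in h by auto. lra.
Qed.
End HBReal.
Section Ultra.
Variable T : Type.
Variable U : (T -> Prop) -> Prop.
Hypothesis UI : forall A C, U A -> U C -> U (fun x => A x /\ C x).
Hypothesis US : forall A C : T -> Prop, (forall x, A x -> C x) -> U A -> U C.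
Hypothesis UN : forall A, U A -> exists x, A x.
Hypothesis UU : forall A, U A \/ U (fun x => ~ A x).

Lemma UT : U (fun _ => True).
Proof using UI US UN UU. destruct (UU (fun _ => True)) as [h|h]; eapply US; eauto; simpl; auto. Qed.

Lemma U_false (P : Prop) : U (fun _ => P) -> P.
Proof using UI US UN UU. intro h; destruct (UN _ h); auto. Qed.

Definition convR (a : T -> R) (l : R) := forall e, 0 < e -> U (fun y => Rabs (a y - l) < e).
Definition convC (a : T -> Cx) (l : Cx) := forall e, 0 < e -> U (fun y => Cabs (Csub (a y) l) < e).

Lemma convR_ex (a : T -> R) M : (forall y, Rabs (a y) <= M) -> exists l, convR a l.
Proof using UI US UN UU.
  intro HM. set (S := fun t => U (fun y => t <= a y)).
  assert (Sne : exists t, S t).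
  { exists (- M). unfold S. eapply US; [|apply UT]. intros y _. pose proof (HM y).
    apply Rabs_le_inv in H; lra. }
  assert (Sb : bound S).
  { exists M. intros t St. destruct (UN _ St) as [y hy]. pose proof (HM y).
    apply Rabs_le_inv in H; lra. }
  destruct (completeness S Sb Sne) as [l [Hub Hlub]].
  exists l. intros e he.
  assert (lo : U (fun y => l - e < a y)).
  { apply NNPP; intro hn. assert (l <= l - e); [|lra].
    apply Hlub. intros t St. destruct (Rle_lt_dec t (l - e)) as [h|h]; auto.
    exfalso; apply hn. eapply US; [|apply St]. simpl; intros y hy; lra. }
  assert (hi : U (fun y => a y < l + e)).
  { destruct (UU (fun y => a y < l + e)) as [h|h]; auto. exfalso.
    assert (l + e <= l); [|lra]. apply Hub. unfold S. eapply US; [|apply h].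
    simpl; intros y hy; lra. }
  eapply US; [|apply (UI _ _ lo hi)]. simpl; intros y [h1 h2]. apply Rabs_def1; lra.
Qed.

Lemma convC_ex (a : T -> Cx) M : (forall y, Cabs (a y) <= M) -> exists l, convC a l.
Proof using UI US UN UU.
  intro HM.
  destruct (convR_ex (fun y => re (a y)) M) as [l1 H1].
  { intro y; eapply Rle_trans; [apply Cabs_re|apply HM]. }
  destruct (convR_ex (fun y => im (a y)) M) as [l2 H2].
  { intro y; eapply Rle_trans; [apply Cabs_im|apply HM]. }
  exists (mkC l1 l2). intros e he.
  eapply US; [|apply (UI _ _ (H1 (e/2) ltac:(lra)) (H2 (e/2) ltac:(lra)))].
  simpl; intros y [h1 h2]. eapply Rle_lt_trans; [apply Cabs_le_sum|].
  unfold Csub, Cadd, Copp; simpl. unfold Rminus in h1, h2. lra.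
Qed.

Lemma convC_unique a l m : convC a l -> convC a m -> l = m.
Proof using UI US UN UU.
  intros Hl Hm. apply NNPP; intro ne.
  assert (hp : 0 < Cabs (Csub l m)).
  { apply Cabs_pos. intro E. apply ne. apply Cx_ext;
    [apply (f_equal re) in E | apply (f_equal im) in E]; unfold Csub, Cadd, Copp, C0 in E; simpl in E; lra. }
  set (e := Cabs (Csub l m) / 2).
  assert (HF : Cabs (Csub l m) < Cabs (Csub l m)); [|lra]. apply U_false.
  eapply US; [|apply (UI _ _ (Hl e ltac:(unfold e; lra)) (Hm e ltac:(unfold e; lra)))].
  simpl; intros y [h1 h2].
  pose proof (Cabs_sub_tri l (a y) m). rewrite (Cabs_sub_sym l (a y)) in H. unfold e in *; lra.
Qed.

Lemma convC_add a b l m : convC a l -> convC b m ->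
  convC (fun y => Cadd (a y) (b y)) (Cadd l m).
Proof using UI US UN UU.
  intros Hl Hm e he.
  eapply US; [|apply (UI _ _ (Hl (e/2) ltac:(lra)) (Hm (e/2) ltac:(lra)))].
  simpl; intros y [h1 h2].
  replace (Csub (Cadd (a y) (b y)) (Cadd l m)) with (Cadd (Csub (a y) l) (Csub (b y) m))
    by (apply Cx_ext; unfold Csub, Cadd, Copp; simpl; ring).
  eapply Rle_lt_trans; [apply Cabs_triangle|]. lra.
Qed.

Lemma convC_scal c a l : convC a l -> convC (fun y => Cmul c (a y)) (Cmul c l).
Proof using UI US UN UU.
  intros Hl e he.
  eapply US; [|apply (Hl (e / (Cabs c + 1))); apply Rdiv_lt_0_compat; pose proof (Cabs_ge0 c); lra].
  simpl; intros y h.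
  replace (Csub (Cmul c (a y)) (Cmul c l)) with (Cmul c (Csub (a y) l))
    by (apply Cx_ext; unfold Csub, Cadd, Copp, Cmul; simpl; ring).
  rewrite Cabs_mul. pose proof (Cabs_ge0 c). pose proof (Cabs_ge0 (Csub (a y) l)).
  apply Rle_lt_trans with ((Cabs c + 1) * Cabs (Csub (a y) l)); [nra|].
  apply (Rmult_lt_compat_l (Cabs c + 1)) in h; [|lra].
  replace ((Cabs c + 1) * (e / (Cabs c + 1))) with e in h by (field; lra). exact h.
Qed.

Lemma convC_mul a b l m M : (forall y, Cabs (a y) <= M) -> convC a l -> convC b m ->
  convC (fun y => Cmul (a y) (b y)) (Cmul l m).
Proof using UI US UN UU.
  intros HM Hl Hm e he.
  assert (M0 : 0 <= M) by (destruct (UN _ UT) as [x _]; pose proof (Cabs_ge0 (a x)); pose proof (HM x); lra).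
  set (K := M + Cabs m + 1).
  assert (K0 : 0 < K) by (unfold K; pose proof (Cabs_ge0 m); lra).
  eapply US; [|apply (UI _ _ (Hl (e/K) ltac:(apply Rdiv_lt_0_compat; lra))
                           (Hm (e/K) ltac:(apply Rdiv_lt_0_compat; lra)))].
  simpl; intros y [h1 h2].
  replace (Csub (Cmul (a y) (b y)) (Cmul l m)) with
    (Cadd (Cmul (a y) (Csub (b y) m)) (Cmul (Csub (a y) l) m))
    by (apply Cx_ext; unfold Csub, Cadd, Copp, Cmul; simpl; ring).
  eapply Rle_lt_trans; [apply Cabs_triangle|]. rewrite !Cabs_mul.
  pose proof (HM y). pose proof (Cabs_ge0 (a y)). pose proof (Cabs_ge0 m).
  pose proof (Cabs_ge0 (Csub (b y) m)). pose proof (Cabs_ge0 (Csub (a y) l)).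
  assert (Cabs (a y) * Cabs (Csub (b y) m) <= M * (e / K)).
  { apply Rmult_le_compat; lra. }
  assert (Cabs (Csub (a y) l) * Cabs m <= (e / K) * Cabs m).
  { apply Rmult_le_compat_r; lra. }
  assert (M * (e / K) + e / K * Cabs m < e).
  { replace (M * (e / K) + e / K * Cabs m) with (e * ((M + Cabs m) / K)) by (field; lra).
    assert ((M + Cabs m) / K < 1).
    { apply (Rmult_lt_reg_r K); [lra|]. replace ((M + Cabs m) / K * K) with (M + Cabs m) by (field; lra).
      unfold K; lra. }
    nra. }
  lra.
Qed.

Lemma convC_const c : convC (fun _ => c) c.
Proof using UI US UN UU. intros e he. eapply US; [|apply UT]. simpl; intros. rewrite Csub_same, Cabs_C0; auto. Qed.

Definition ulim (a : T -> Cx) : Cx :=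
  match excluded_middle_informative (exists l, convC a l) with
  | left h => proj1_sig (constructive_indefinite_description _ h)
  | right _ => C0 end.

Lemma ulim_spec a l : convC a l -> ulim a = l.
Proof using UI US UN UU.
  intro H. unfold ulim. destruct excluded_middle_informative as [h|h].
  - destruct (constructive_indefinite_description _ h) as [l' H']; simpl. eapply convC_unique; eauto.
  - exfalso; eauto.
Qed.

End Ultra.

Section MainPart.
Variable X : CBanach.
Notation nm := (bnorm X).

Lemma Csub_eq0 a b : Csub a b = C0 -> a = b.
Proof.
  intro E. apply Cx_ext; [apply (f_equal re) in E | apply (f_equal im) in E];
  unfold Csub, Cadd, Copp, C0 in E; simpl in E; lra.
Qed.

Lemma Cabs_split a b : Cabs a <= Cabs (Csub a b) + Cabs b.
Proof.
  replace a with (Cadd (Csub a b) b) at 1 by (apply Cx_ext; unfold Csub, Cadd, Copp; simpl; ring).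
  apply Cabs_triangle.
Qed.

Lemma zero_dual : in_dual X (fun _ => C0).
Proof.
  split; [|split].
  - intros; apply Cx_ext; unfold Cadd, C0; simpl; ring.
  - intros; apply Cx_ext; unfold Cmul, C0; simpl; ring.
  - exists 0; intro x; rewrite Cabs_C0; lra.
Qed.

Lemma const_in_Au c : in_Au X (fun _ => c).
Proof.
  split.
  - intro x. exists (fun _ => C0). split; [apply zero_dual|].
    intros e he. exists 1; split; [lra|]. intros y _.
    rewrite Csub_same. replace (Csub C0 C0) with C0 by (apply Cx_ext; unfold Csub, Cadd, Copp, C0; simpl; ring).
    rewrite Cabs_C0. pose proof (bnorm_ge0 X (bsub X (proj1_sig y) (proj1_sig x))). nra.
  - intros e he. exists 1; split; [lra|]. intros. rewrite Csub_same, Cabs_C0; auto.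
Qed.

Lemma dual_in_Au L : in_dual X L -> in_Au X (fun x : Ball X => L (proj1_sig x)).
Proof.
  intro HL. pose proof HL as (_ & _ & [M HM]). destruct (bounded_pos X L M HM) as [K [K0 HK]].
  split.
  - intro x. exists L. split; auto. intros e he. exists 1; split; [lra|]. intros y _.
    rewrite <- dual_sub by auto. rewrite Csub_same, Cabs_C0.
    pose proof (bnorm_ge0 X (bsub X (proj1_sig y) (proj1_sig x))). nra.
  - intros e he. exists (e / K). split; [apply Rdiv_lt_0_compat; lra|]. intros x y h.
    rewrite <- dual_sub by auto. eapply Rle_lt_trans; [apply HK|].
    apply (Rmult_lt_compat_l K) in h; [|lra]. replace (K * (e / K)) with e in h by (field; lra). lra.
Qed.

Lemma holo_cont f : holomorphic X f -> forall (x : Ball X) e, 0 < e -> exists d, 0 < d /\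
  forall y : Ball X, nm (bsub X (proj1_sig y) (proj1_sig x)) < d -> Cabs (Csub (f y) (f x)) < e.
Proof.
  intros Hf x e he. destruct (Hf x) as [L [HL HD]].
  pose proof HL as (_ & _ & [M HM]). destruct (bounded_pos X L M HM) as [K [K0 HK]].
  destruct (HD 1 ltac:(lra)) as [d1 [d1p Hd1]].
  exists (Rmin d1 (e / (K + 2))). split.
  { apply Rmin_pos; auto. apply Rdiv_lt_0_compat; lra. }
  intros y hy. pose proof (Rmin_l d1 (e / (K + 2))). pose proof (Rmin_r d1 (e / (K + 2))).
  set (n := nm (bsub X (proj1_sig y) (proj1_sig x))) in *.
  assert (n0 : 0 <= n) by apply bnorm_ge0.
  assert (hd : n < d1) by lra. pose proof (Hd1 y hd) as h1. fold n in h1.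
  pose proof (HK (bsub X (proj1_sig y) (proj1_sig x))) as h2. fold n in h2.
  pose proof (Cabs_split (Csub (f y) (f x)) (L (bsub X (proj1_sig y) (proj1_sig x)))) as h3.
  assert (n < e / (K + 2)) by lra.
  apply (Rmult_lt_compat_l (K + 2)) in H1; [|lra].
  replace ((K + 2) * (e / (K + 2))) with e in H1 by (field; lra). nra.
Qed.

Lemma list_bound (Ls : list (X -> Cx)) : Forall (in_dual X) Ls ->
  exists K, 0 < K /\ forall L, In L Ls -> bounded_by X L K.
Proof.
  induction 1 as [|L Ls HL HLs IH].
  - exists 1; split; [lra|]. intros L [].
  - destruct IH as [K1 [K1p HK1]]. pose proof HL as (_ & _ & [M HM]).
    destruct (bounded_pos X L M HM) as [K2 [K2p HK2]].
    exists (Rmax K1 K2). split. { eapply Rlt_le_trans; [apply K1p|apply Rmax_l]. }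
    intros L' [<-|inL] x.
    + eapply Rle_trans; [apply HK2|]. apply Rmult_le_compat_r; [apply bnorm_ge0|apply Rmax_r].
    + eapply Rle_trans; [apply HK1; auto|]. apply Rmult_le_compat_r; [apply bnorm_ge0|apply Rmax_l].
Qed.

End MainPart.

Theorem mainTheorem3 (X : CBanach) (H : (Ball X -> Cx) -> Prop)
  (HH : uniform_algebra_between X H)
  (x0 : bidual X) (Hx0 : in_bidual_ball X x0)
  (f : Ball X -> Cx) (Hf : H f)
  (Hconst : forall tau1 tau2, in_fiber X H x0 tau1 -> in_fiber X H x0 tau2 ->
              tau1 f = tau2 f) :
  exists f0 : option (Ball X) -> Cx,
    (forall x : Ball X, f0 (Some x) = f x) /\
    norm_continuous_on X x0 f0 /\
    weakstar_continuous_at_x0 X x0 f0.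
Proof.
  pose proof HH as (HAu & HHinf & Hadd & Hscal & Hmul & _).
  set (c := match excluded_middle_informative (exists tau, in_fiber X H x0 tau) with
            | left h => proj1_sig (constructive_indefinite_description _ h) f
            | right _ => C0 end).
  assert (c_spec : forall tau, in_fiber X H x0 tau -> c = tau f).
  { intros tau Ht. unfold c. destruct excluded_middle_informative as [h|h].
    - destruct (constructive_indefinite_description _ h) as [t' Ht']; simpl. apply Hconst; auto.
    - exfalso; eauto. }
  assert (C10 : C1 <> C0).
  { intro E; apply (f_equal re) in E; unfold C1, C0 in E; simpl in E; lra. }
  set (f0 := fun p : option (Ball X) => match p with Some x => f x | None => c end).
  assert (WS : weakstar_continuous_at_x0 X x0 f0).
  { intros eps he. apply NNPP; intro hn.
    assert (Hneg : forall Ls d, Forall (in_dual X) Ls -> 0 < d -> exists y : Ball X,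
       (forall L, In L Ls -> Cabs (Csub (L (proj1_sig y)) (x0 L)) < d) /\ eps <= Cabs (Csub (f y) c)).
    { intros Ls d HLs hd. apply NNPP; intro hq. apply hn. exists Ls, d. split; auto; split; auto.
      intros q Hq. destruct q as [y|].
      - apply Rnot_le_lt; intro hle. apply hq; exists y; split; auto.
      - simpl; rewrite Csub_same, Cabs_C0; auto. }
    set (I := { p : list (X -> Cx) * R | Forall (in_dual X) (fst p) /\ 0 < snd p }).
    set (Bs := fun (i : I) (y : Ball X) =>
      (forall L, In L (fst (proj1_sig i)) -> Cabs (Csub (L (proj1_sig y)) (x0 L)) < snd (proj1_sig i))
      /\ eps <= Cabs (Csub (f y) c)).
    destruct (MCAux.ultra_ex I (Ball X) Bs) as [U [UB [UI [US [UN UU]]]]].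
    - unshelve eexists (exist _ (nil, 1) _); simpl; auto. split; [constructor|lra].
    - intros [[L1 d1] [h1 h1']] [[L2 d2] [h2 h2']]. simpl in *.
      unshelve eexists (exist _ (L1 ++ L2, Rmin d1 d2) _).
      { simpl; split; [apply Forall_app; auto|apply Rmin_pos; auto]. }
      intros y [hy1 hy2]; simpl in *. split; split; auto; intros L inL.
      + eapply Rlt_le_trans; [apply hy1; apply in_or_app; auto|apply Rmin_l].
      + eapply Rlt_le_trans; [apply hy1; apply in_or_app; auto|apply Rmin_r].
    - intros [[Ls d] [h1 h2]]. simpl in *. destruct (Hneg Ls d h1 h2) as [y hy]. exists y; exact hy.
    - set (tau := fun g => ulim (Ball X) U g).
      assert (convH : forall g, H g -> convC (Ball X) U g (tau g)).
      { intros g Hg. destruct (HHinf g Hg) as [_ [M HM]].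
        destruct (convC_ex (Ball X) U UI US UN UU g M HM) as [l Hl].
        unfold tau. rewrite (ulim_spec (Ball X) U UI US UN UU g l Hl). exact Hl. }
      assert (Ht : in_fiber X H x0 tau).
      { split; [split; [|split; [|split]]|].
        - intros g h Hg Hh. apply (ulim_spec (Ball X) U UI US UN UU).
          apply convC_add; auto.
        - intros a g Hg. apply (ulim_spec (Ball X) U UI US UN UU).
          apply convC_scal; auto.
        - intros g h Hg Hh. destruct (HHinf g Hg) as [_ [M HM]].
          apply (ulim_spec (Ball X) U UI US UN UU).
          apply (convC_mul (Ball X) U UI US UN UU _ _ _ _ M); auto.
        - exists (fun _ => C1). split; [apply HAu, const_in_Au|].
          unfold tau. rewrite (ulim_spec (Ball X) U UI US UN UU _ C1); auto.
          apply convC_const; auto.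
        - intros L HL. apply (ulim_spec (Ball X) U UI US UN UU).
          intros e he'.
          assert (hi : Forall (in_dual X) (fst (L :: nil, e)) /\ 0 < snd (L :: nil, e)).
          { simpl; split; auto. }
          eapply US; [|apply (UB (exist _ (L :: nil, e) hi))].
          intros y [hy _]. simpl in hy. apply hy; auto. }
      pose proof (c_spec tau Ht) as Ec.
      assert (hi : Forall (in_dual X) (fst (@nil (X -> Cx), 1)) /\ 0 < snd (@nil (X -> Cx), 1)).
      { simpl; split; [constructor|lra]. }
      destruct (UN _ (UI _ _ (UB (exist _ (nil, 1) hi)) (convH f Hf eps he))) as [y [[_ hy1] hy2]].
      rewrite Ec in hy1. lra. }
  exists f0. split; [intro; reflexivity|]. split; auto.
  intros p eps he. destruct p as [x|].
  - destruct (holo_cont X f (proj1 (HHinf f Hf)) x eps he) as [d1 [d1p Hd1]].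
    assert (Hsome : forall d, d <= d1 / 2 -> forall y : Ball X,
        bidual_dist_lt X (emb X x0 (Some y)) (emb X x0 (Some x)) d ->
        Cabs (Csub (f0 (Some y)) (f0 (Some x))) < eps).
    { intros d hd y [d' [hd' Hd']]. simpl. apply Hd1.
      pose proof (bidual_norm_control X (proj1_sig x) (proj1_sig y) d' Hd'). lra. }
    destruct (classic (forall L, in_dual X L -> x0 L = L (proj1_sig x))) as [Hall|Hex].
    + assert (Hev : in_fiber X H x0 (fun g => g x)).
      { split; [split; [|split; [|split]]|].
        - intros; reflexivity.
        - intros; reflexivity.
        - intros; reflexivity.
        - exists (fun _ => C1); split; auto. apply HAu, const_in_Au.
        - intros L HL; simpl; symmetry; apply Hall; auto. }
      pose proof (c_spec _ Hev) as Ec.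
      exists (d1 / 2). split; [lra|]. intros [y|] Hq.
      * apply (Hsome (d1/2)); auto; lra.
      * simpl. rewrite Ec, Csub_same, Cabs_C0; auto.
    + apply not_all_ex_not in Hex. destruct Hex as [L HL].
      apply imply_to_and in HL. destruct HL as [HLd HLne].
      pose proof HLd as (_ & _ & [M HM]). destruct (bounded_pos X L M HM) as [K [K0 HK]].
      set (gap := Cabs (Csub (x0 L) (L (proj1_sig x)))).
      assert (gp : 0 < gap).
      { apply Cabs_pos. intro E. apply HLne, Csub_eq0, E. }
      exists (Rmin (d1 / 2) (gap / K)). split.
      { apply Rmin_pos; [lra|apply Rdiv_lt_0_compat; lra]. }
      intros [y|] Hq.
      * apply (Hsome (Rmin (d1 / 2) (gap / K))); auto. apply Rmin_l.
      * exfalso. destruct Hq as [d [hd Hd]]. pose proof (Hd L K HLd ltac:(lra) HK) as h.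
        simpl in h. unfold Jcan in h. fold gap in h.
        pose proof (Rmin_r (d1 / 2) (gap / K)).
        assert (d * K < gap / K * K) by (apply Rmult_lt_compat_r; lra).
        replace (gap / K * K) with gap in H1 by (field; lra). lra.
  - destruct (WS eps he) as [Ls [d [HLs [dp HW]]]].
    destruct (list_bound X Ls HLs) as [K [K0 HK]].
    exists (d / K). split; [apply Rdiv_lt_0_compat; lra|].
    intros q [d' [hd' Hd']]. apply HW. intros L inL.
    pose proof (Hd' L K (proj1 (Forall_forall _ _) HLs L inL) ltac:(lra) (HK L inL)) as h.
    simpl in h.
    assert (d' * K < d / K * K) by (apply Rmult_lt_compat_r; lra).
    replace (d / K * K) with d in H0 by (field; lra). lra.
Qed.
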